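(* Let the sequence $\gamma(0),\gamma(1),\dots$ be defined by $\gamma(0)=0$ and recursively $$\gamma(2^l-k)=\frac{2^l+2(-1)^l}{3}-k+2\gamma(k)\qquad (l\ge 0,\ 0\le k\le 2^{l-1}).$$ For a positive integer $n$ let $b(n)$ be the number of maximal blocks of consecutive ones in the binary representation of $n$, and $b(0)=0$. Then: (i) $\gamma(2^l+k)=\frac{2^l+2(-1)^l}{3}-k+4\gamma(k)$ for all integers $l\ge0$ and $0\le k\le 2^{l-1}$; (ii) $\gamma(2^l-k)=\gamma(k)+2\gamma(2^{l-1}-k)$ for all integers $l\ge 0$ and integers $k$ with $2^{l-2}\le k\le 2^{l-1}$; (iii) $\gamma(2^l+k)=1+\gamma(2^l+k-1)+2\gamma(2^l-k)-2\gamma(2^l+1-k)$ for all integers $l\ge0$ and $1\le k\le 2^l$; (iv) for all $n\in\mathbf{N}$, $\gamma(2n)=n-\gamma(n)$ and $\gamma(2n+1)=\gamma(2n)+(2^{1+2b(n)}+1)/3=n-\gamma(n)+(2^{1+2b(n)}+1)/3$; and for all $n\ge1$, $\gamma(2n-1)=\gamma(2n)+(4^{b(2n-1)}-1)/3=n-\gamma(n)+(4^{b(2n-1)}-1)/3$.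
   Context: For example $667=(1010011011)_2$ has $b(667)=4$. Equivalently $b$ satisfies $b(0)=0$, $b(2n)=b(n)$, $b(2n+1)=b(n)+1-(n\bmod 2)$. *)

(* Defs.v *)
From mathcomp Require Import all_boot all_algebra.
Set Implicit Arguments. Unset Strict Implicit. Unset Printing Implicit Defensive.
Import GRing.Theory Num.Theory.
Local Open Scope ring_scope.

(* The constant (2^l + 2(-1)^l)/3 (an exact integer division). *)
Definition gconst (l : nat) : int := ((2 ^+ l + 2 * (-1) ^+ l) %/ 3)%Z.

(* gamma(0) = 0 and, for n >= 1, writing n = 2^l - k with l = up_log 2 n
   (the least l with n <= 2^l), so that 0 <= k < 2^(l-1) (or l = 0, k = 0),
   gamma(n) = gconst l - k + 2 gamma(k).  The fuel argument f >= n is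
   sufficient since k < n. *)
Fixpoint gamma_aux (f n : nat) : int :=
  match f with
  | 0 => 0
  | f'.+1 =>
      if n == 0%N then 0 else
      let l := up_log 2 n in
      let k := (2 ^ l - n)%N in
      gconst l - k%:Z + 2 * gamma_aux f' k
  end.

Definition gamma (n : nat) : int := gamma_aux n n.

Definition bit (n i : nat) : bool := odd (n %/ 2 ^ i).

(* b(n): number of maximal blocks of consecutive ones in binary n, counted
   as the number of block starts: positions i with bit i = 1 and
   (i = 0 or bit (i-1) = 0).  All bits at positions > n are 0. *)
Definition nblocks (n : nat) : nat :=
  count (fun i => bit n i && ((i == 0%N) || ~~ bit n i.-1)) (iota 0 n.+1).

(* Main.v *)
Require Import Defs.
From mathcomp Require Import all_boot all_algebra zify ring lra.
Import GRing.Theory Num.Theory.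

Definition bpred n := fun i => bit n i && ((i == 0%N) || ~~ bit n i.-1).
Definition nb' n N := count (bpred n) (iota 0 N).

Lemma bit_big n i : (n < 2 ^ i)%N -> bit n i = false.
Proof. by move=> h; rewrite /bit divn_small. Qed.

Lemma nb'S n N : nb' n N.+1 = (nb' n N + bpred n N)%N.
Proof. by rewrite /nb' -addn1 iotaD count_cat /= add0n addn0. Qed.

Lemma nb'_stable n N : (n < N)%N -> nb' n N = nblocks n.
Proof.
elim: N => [//|N IH]; rewrite ltnS leq_eqVlt => /orP [/eqP <- //| h].
rewrite nb'S IH // /bpred bit_big ?addn0 //.
by apply: (leq_trans h); apply: ltnW; apply: ltn_expl.
Qed.

Lemma bit2 m e i : (e < 2)%N -> bit (2 * m + e) i.+1 = bit m i.
Proof.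
move=> he; rewrite /bit expnS divnMA (mulnC 2) divnMDl // (divn_small he).
by rewrite addn0.
Qed.

Lemma bit20 m e : (e < 2)%N -> bit (2 * m + e) 0 = odd e.
Proof. by move=> he; rewrite /bit expn0 divn1 oddD oddM /=. Qed.

Lemma count_shift (P : pred nat) N :
  count P (iota 0 N.+1) = (P 0%N + count (fun i => P i.+1) (iota 0 N))%N.
Proof.
rewrite /=; congr addn.
by rewrite -[1%N]/(1 + 0)%N iotaDl count_map; apply: eq_count.
Qed.

Lemma nb_2m m e : (e < 2)%N ->
  nblocks (2 * m + e) = (odd e + count (fun i => bpred (2 * m + e) i.+1) (iota 0 (2 * m + 1)))%N.
Proof.
move=> he; rewrite -(@nb'_stable (2 * m + e) (2 * m + 1).+1); last by lia.
rewrite /nb' count_shift /bpred /= bit20 //=; case: (odd e) => //.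
Qed.

Lemma nb_even m : nblocks (2 * m) = nblocks m.
Proof.
have := @nb_2m m 0 (isT : (0 < 2)%N); rewrite addn0 => ->.
rewrite -(@nb'_stable m (2 * m + 1)); last by lia.
apply: eq_count => -[|i]; rewrite /bpred /= -[2 * m]addn0 ?bit20 ?bit2 //.
Qed.

Lemma nb_odd m : nblocks (2 * m + 1) = (nblocks m + 1 - odd m)%N.
Proof.
rewrite nb_2m // -(@nb'_stable m (2 * m + 1)); last by lia.
rewrite /nb' addn1 !count_shift.
have -> : count (fun i => bpred (2 * m).+1 i.+2) (iota 0 (2 * m))
   = count (fun i => bpred m i.+1) (iota 0 (2 * m)).
  by apply: eq_count => i; rewrite /bpred /= -(addn1 (2 * m)) !bit2.
rewrite {1 3}/bpred /= -(addn1 (2 * m)) bit2 // bit20 // andbF /bit expn0 divn1 andbT.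
case: (odd m) => /=; lia.
Qed.



Lemma nb_comp L x : (x < 2 ^ L.+1)%N ->
  (nblocks (2 ^ L.+1 - 1 - x) + odd x + (2 ^ L <= x) = nblocks x + 1)%N.
Proof.
elim: L x => [|L IH] x.
  by case: x => [|[|x]].
move=> hx.
have [x' [e [he ex]]] : exists x' e, (e < 2 /\ x = 2 * x' + e)%N.
  exists (x %/ 2), (x %% 2); split; first by rewrite ltn_mod.
  by rewrite mulnC -divn_eq.
have hx' : (x' < 2 ^ L.+1)%N by move: hx; rewrite ex expnS; lia.
set c' := (2 ^ L.+1 - 1 - x')%N.
have hc : odd c' = ~~ odd x'.
  have : (x' + c' + 1 = 2 * 2 ^ L)%N by move: hx'; rewrite /c' expnS; lia.
  move/(congr1 odd); rewrite !oddD /=.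
  by case: (odd x'); case: (odd c'); case: (odd (2 ^ L)).
have IHx := IH x' hx'.
have hle : (2 ^ L.+1 <= x)%N = (2 ^ L <= x')%N.
  by rewrite ex expnS; apply/idP/idP; lia.
rewrite hle {hle}; rewrite {}ex {hx}.
case: e he => [|[|//]] _.
- have -> : (2 ^ L.+2 - 1 - (2 * x' + 0) = 2 * c' + 1)%N by rewrite /c' expnS; lia.
  rewrite nb_odd addn0 nb_even oddM /= hc.
  move: IHx; rewrite -/c'; case: (odd x') => /=; lia.
- have E : (2 ^ L.+2 - 1 - (2 * x' + 1) = 2 * c')%N by rewrite /c' expnS; lia.
  rewrite E.
  rewrite nb_even nb_odd oddD oddM /=.
  move: IHx; rewrite -/c'; case: (odd x') => /=; lia.
Qed.

Lemma klt n : (0 < n)%N -> (2 ^ up_log 2 n - n < n)%N /\ (2 * (2 ^ up_log 2 n - n) < 2 ^ up_log 2 n)%N.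
Proof.
case: n => [//|[|n]] _; first by rewrite up_log1.
have := up_log_bounds (isT : (1 < 2)%N) (isT : (1 < n.+2)%N).
have := up_log_gt0 2 n.+2; rewrite /= => /prednK <-.
rewrite expnS /=; lia.
Qed.

Lemma gamma_aux_fuel f1 f2 n : (n <= f1)%N -> (n <= f2)%N -> gamma_aux f1 n = gamma_aux f2 n.
Proof.
elim: f1 f2 n => [|f IH] [|g] n /=.
- by [].
- by rewrite leqn0 => /eqP -> _; case: g.
- by move=> _; rewrite leqn0 => /eqP ->.
- move=> h1 h2; case: eqP => // /eqP n0.
  have n0' : (0 < n)%N by lia. have [h _] := @klt n n0'.
  rewrite (IH g) //; lia.
Qed.

Lemma gammaE n : (0 < n)%N -> gamma n = (gconst (up_log 2 n) - (2 ^ up_log 2 n - n)%N%:Z + 2 * gamma (2 ^ up_log 2 n - n)%N)%R.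
Proof.
move=> n0; have [h _] := @klt n n0.
rewrite /gamma; case: n n0 h => [//|n] _ h /=.
by rewrite (@gamma_aux_fuel n (2 ^ up_log 2 n.+1 - n.+1)) //; lia.
Qed.

Local Open Scope ring_scope.


Lemma gconst0 : gconst 0 = 1.
Proof. by []. Qed.

Lemma gconstE l : gconst l * 3 = 2 ^+ l + 2 * (-1) ^+ l /\ gconst l.+1 = 2 ^+ l - gconst l.
Proof.
elim: l => [|l [IH1 IH2]]; first by split.
have H : forall m, gconst m.+1 * 3 = 2 ^+ m.+1 + 2 * (-1) ^+ m.+1 ->
   gconst m.+1 = 2 ^+ m - gconst m -> True by [].
have E2 : gconst l.+2 = 2 ^+ l.+1 - gconst l.+1.
  rewrite /gconst.
  have -> : (2 ^+ l.+2 + 2 * (-1) ^+ l.+2 : int) = (2 ^+ l.+1 - gconst l.+1) * 3.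
    rewrite IH2 !mulrBl IH1 !exprS; ring.
  by rewrite mulzK.
split=> //.
rewrite IH2 !mulrBl IH1 !exprS; ring.
Qed.

Lemma gconstS l : gconst l.+1 = 2 ^+ l - gconst l.
Proof. by case: (gconstE l). Qed.

Definition DD (B : nat) : int := ((4 ^+ B - 1) %/ 3)%Z.
Definition EE (B : nat) : int := ((2 ^+ (1 + 2 * B) + 1) %/ 3)%Z.

Lemma DDE B : DD B * 3 = 4 ^+ B - 1 /\ DD B.+1 = 4 * DD B + 1.
Proof.
elim: B => [|B [IH1 IH2]]; first by split.
have E2 : DD B.+2 = 4 * DD B.+1 + 1.
  rewrite /DD.
  have -> : (4 ^+ B.+2 - 1 : int) = (4 * DD B.+1 + 1) * 3.
    rewrite IH2; move: IH1; rewrite !exprS; lra.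
  by rewrite mulzK.
split=> //.
rewrite IH2; move: IH1; rewrite !exprS; lra.
Qed.

Lemma EED B : EE B = 2 * DD B + 1.
Proof.
rewrite /EE.
have -> : (2 ^+ (1 + 2 * B) + 1 : int) = (2 * DD B + 1) * 3.
  move: (proj1 (DDE B)); rewrite exprD exprM; lra.
by rewrite mulzK.
Qed.

Lemma DDS B : DD B.+1 = 2 * EE B - 1.
Proof. rewrite EED (proj2 (DDE B)); ring. Qed.


Lemma Z2X l : ((2 ^ l)%N)%:Z = 2 ^+ l.
Proof. elim: l => [//|l IH]; by rewrite expnS PoszM IH exprS. Qed.

Lemma gamma0 : gamma 0 = 0.
Proof. by []. Qed.

Lemma R_strict l k : (2 * k < 2 ^ l)%N ->
  gamma (2 ^ l - k) = gconst l - k%:Z + 2 * gamma k.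
Proof.
move=> h.
have ul : up_log 2 (2 ^ l - k) = l.
  case: l h => [|L] h; first by have -> : k = 0%N by lia.
  apply: up_log_eq => //; move: h; rewrite expnS; lia.
rewrite gammaE; last by move: (ltn_expl l (isT : (1 < 2)%N)); lia.
rewrite ul subKn //; lia.
Qed.

Lemma R l k : (2 * k <= 2 ^ l)%N ->
  gamma (2 ^ l - k) = gconst l - k%:Z + 2 * gamma k.
Proof.
rewrite leq_eqVlt => /orP [/eqP e|]; last exact: R_strict.
case: l e => [|L] e; first by lia.
have ek : k = (2 ^ L)%N by move: e; rewrite expnS; lia.
have g2 := @R_strict L 0 (ltac:(rewrite expn_gt0; lia)).
rewrite subn0 gamma0 mulr0 addr0 subr0 in g2.
rewrite ek (_ : (2 ^ L.+1 - 2 ^ L = 2 ^ L)%N); last by rewrite expnS; lia.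
rewrite g2 gconstS Z2X; lia.
Qed.

Lemma partI l k : (2 * k <= 2 ^ l)%N ->
  gamma (2 ^ l + k) = gconst l - k%:Z + 4 * gamma k.
Proof.
move=> h.
rewrite (_ : (2 ^ l + k = 2 ^ l.+1 - (2 ^ l - k))%N); last by rewrite expnS; lia.
rewrite R; last by rewrite expnS; lia.
rewrite R // gconstS.
have := Z2X l; lia.
Qed.

Lemma partII l k : (2 ^ l <= 4 * k)%N -> (2 * k <= 2 ^ l)%N ->
     gamma (2 ^ l - k) = gamma k + 2 * gamma (2 ^ l.-1 - k).
Proof.
case: l => [|L] /= h1 h2; first by lia.
have hk : (k <= 2 ^ L)%N by move: h2; rewrite expnS; lia.
have := @R L (2 ^ L - k) (ltac:(move: h1; rewrite expnS; lia)).
rewrite subKn // => hg.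
rewrite R // gconstS hg.
have := Z2X L; lia.
Qed.

Lemma gamma1 : gamma 1 = 1.
Proof. by []. Qed.

Lemma partIII l k : (1 <= k)%N -> (k <= 2 ^ l)%N ->
     gamma (2 ^ l + k) =
       1 + gamma (2 ^ l + k - 1) + 2 * gamma (2 ^ l - k)
         - 2 * gamma (2 ^ l + 1 - k).
Proof.
move=> h1 h2.
case: (leqP (2 * k) (2 ^ l)) => h3.
- rewrite partI // (_ : (2 ^ l + k - 1 = 2 ^ l + (k - 1))%N); last by lia.
  rewrite partI; last by lia.
  rewrite (_ : (2 ^ l + 1 - k = 2 ^ l - (k - 1))%N); last by lia.
  rewrite !R //; last by lia.
  lia.
- rewrite (_ : (2 ^ l + k = 2 ^ l.+1 - (2 ^ l - k))%N); last by rewrite expnS; lia.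
  rewrite (_ : (2 ^ l.+1 - (2 ^ l - k) - 1 = 2 ^ l.+1 - (2 ^ l - k).+1)%N); last by rewrite expnS; lia.
  rewrite (_ : (2 ^ l + 1 - k = (2 ^ l - k).+1)%N); last by lia.
  rewrite (@R l.+1 (2 ^ l - k)); last by rewrite expnS; lia.
  rewrite (@R l.+1 (2 ^ l - k).+1); last by rewrite expnS; lia.
  lia.
Qed.

Lemma nb_pow l : nblocks (2 ^ l) = 1%N.
Proof. elim: l => [//|l IH]; by rewrite expnS nb_even. Qed.

Lemma decomp n : (0 < n)%N -> exists l k, [/\ n = (2 ^ l - k)%N, (2 * k < 2 ^ l)%N & (k < n)%N].
Proof.
move=> n0; have [h1 h2] := @klt n n0.
exists (up_log 2 n), (2 ^ up_log 2 n - n)%N; split => //.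
have := up_logP n (isT : (1 < 2)%N); lia.
Qed.

Lemma partIV n :
  gamma (2 * n) = n%:Z - gamma n /\
  gamma (2 * n + 1) = n%:Z - gamma n + EE (nblocks n) /\
  ((1 <= n)%N -> gamma (2 * n - 1) = n%:Z - gamma n + DD (nblocks (2 * n - 1))).
Proof.
elim/ltn_ind: n => -[_|n IH].
  by split; [|split].
have [l [k [en hk hkn]]] := @decomp n.+1 isT.
have [IH1 [IH2 IH3]] := IH k hkn.
have hkl : (k <= 2 ^ l)%N by lia.
have Rn : gamma n.+1 = gconst l - k%:Z + 2 * gamma k by rewrite en R //; lia.
have Cl := gconstS l.
have Zl := Z2X l.
have nZ : n.+1%:Z = 2 ^+ l - k%:Z by rewrite en; lia.
split; [|split].
- rewrite (_ : (2 * n.+1 = 2 ^ l.+1 - 2 * k)%N); last by rewrite en expnS; lia.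
  rewrite R; last by rewrite expnS; lia.
  rewrite IH1; lia.
- case: (posnP k) => k0.
  + have el : n.+1 = (2 ^ l)%N by lia.
    rewrite el (_ : (2 * 2 ^ l + 1 = 2 ^ l.+1 + 1)%N); last by rewrite expnS.
    rewrite partI; last by rewrite expnS; lia.
    rewrite gamma1 nb_pow (_ : EE 1 = 3) //.
    move: Rn; rewrite el k0 gamma0; lia.
  + rewrite (_ : (2 * n.+1 + 1 = 2 ^ l.+1 - (2 * k - 1))%N); last by rewrite en expnS; lia.
    rewrite R; last by rewrite expnS; lia.
    rewrite IH3 //.
    have hb := @nb_comp l (2 * n.+1) (ltac:(rewrite expnS; lia)).
    rewrite (_ : (2 ^ l.+1 - 1 - 2 * n.+1 = 2 * k - 1)%N) in hb; last by rewrite en expnS; lia.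
    rewrite nb_even oddM /= (_ : (2 ^ l <= 2 * n.+1)%N) in hb; last by rewrite en; lia.
    have -> : nblocks (2 * k - 1) = nblocks n.+1 by lia.
    rewrite EED; lia.
- move=> _.
  rewrite (_ : (2 * n.+1 - 1 = 2 ^ l.+1 - (2 * k + 1))%N); last by rewrite en expnS; lia.
  rewrite R; last by rewrite expnS; lia.
  rewrite IH2.
  have hb := @nb_comp l (2 * k) (ltac:(rewrite expnS; lia)).
  rewrite (_ : (2 ^ l.+1 - 1 - 2 * k = 2 ^ l.+1 - (2 * k + 1))%N) in hb; last by lia.
  rewrite nb_even oddM /= (_ : (2 ^ l <= 2 * k)%N = false) in hb; last by apply/negbTE; rewrite -ltnNge.
  rewrite (_ : nblocks (2 ^ l.+1 - (2 * k + 1)) = (nblocks k).+1); last by lia.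
  rewrite DDS; lia.
Qed.

Theorem theorem1p5 :
  (* the defining recursion holds (for all admissible l, k) *)
  (gamma 0 = 0 /\
   forall l k : nat, (2 * k <= 2 ^ l)%N ->
     gamma (2 ^ l - k) = gconst l - k%:Z + 2 * gamma k) /\
  (* (i) *)
  (forall l k : nat, (2 * k <= 2 ^ l)%N ->
     gamma (2 ^ l + k) = gconst l - k%:Z + 4 * gamma k) /\
  (* (ii) *)
  (forall l k : nat, (2 ^ l <= 4 * k)%N -> (2 * k <= 2 ^ l)%N ->
     gamma (2 ^ l - k) = gamma k + 2 * gamma (2 ^ l.-1 - k)) /\
  (* (iii) *)
  (forall l k : nat, (1 <= k)%N -> (k <= 2 ^ l)%N ->
     gamma (2 ^ l + k) =
       1 + gamma (2 ^ l + k - 1) + 2 * gamma (2 ^ l - k)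
         - 2 * gamma (2 ^ l + 1 - k)) /\
  (* (iv) *)
  (forall n : nat,
     gamma (2 * n) = n%:Z - gamma n /\
     gamma (2 * n + 1) =
       gamma (2 * n) + ((2 ^+ (1 + 2 * nblocks n) + 1) %/ 3)%Z /\
     gamma (2 * n + 1) =
       n%:Z - gamma n + ((2 ^+ (1 + 2 * nblocks n) + 1) %/ 3)%Z) /\
  (forall n : nat, (1 <= n)%N ->
     gamma (2 * n - 1) =
       gamma (2 * n) + ((4 ^+ nblocks (2 * n - 1) - 1) %/ 3)%Z /\
     gamma (2 * n - 1) =
       n%:Z - gamma n + ((4 ^+ nblocks (2 * n - 1) - 1) %/ 3)%Z).
Proof.
split; first by split; [exact: gamma0 | exact: R].
split; first exact: partI.
split; first exact: partII.
split; first exact: partIII.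
split.
- move=> n; have [h1 [h2 _]] := partIV n; rewrite /EE in h2.
  by split; [|split]; rewrite // h2 h1.
- move=> n hn; have [h1 [_ h3]] := partIV n; rewrite /DD in h3.
  by split; rewrite h3 // h1.
Qed.
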